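(* Let $\mathbf{X}$ be a finitely supported real random variable with $\mathbf{E}[\mathbf{X}]=0$ and $\mathrm{Var}[\mathbf{X}]=1$. There exists a constant $K'=K'_{\mathbf{X}}$ such that the following holds: suppose $f:\mathbb{R}^n\to\mathbb{R}$ is a multilinear polynomial of degree at most $d$, $T\subseteq[n]$, and $t\ge1$, with \[ \sum_{i\in T}\widehat{f}(\{i\})^2\ge1\quad\text{and}\quad|\widehat{f}(\{i\})|\le\frac{1}{K'td}\ \text{for all } i\in T. \] Then $\Pr_{\mathbf{x}\sim\mathbf{X}^{\otimes n}}[|f(\mathbf{x})|\ge t]\ge\exp(-K't^2d^2)$.
   Context: A multilinear polynomial is written $f(x)=\sum_{S\subseteq[n]}\widehat{f}(S)\prod_{i\in S}x_i$; $\mathbf{X}^{\otimes n}$ is a vector of $n$ i.i.d. copies of $\mathbf{X}$. *)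

(* Defs.v *)
From mathcomp Require Import all_boot all_order all_algebra.
From mathcomp Require Import all_classical all_reals all_analysis.
Set Implicit Arguments. Unset Strict Implicit. Unset Printing Implicit Defensive.
Import Order.TTheory GRing.Theory Num.Theory.
Local Open Scope ring_scope.

(* A finitely supported real random variable X is given by a finite index
   type I, values v : I -> R and probability weights p : I -> R. *)
Definition is_fin_distr (R : realType) (I : finType) (p : I -> R) : Prop :=
  (forall i, 0 <= p i) /\ \sum_(i : I) p i = 1.

Definition fexpect (R : realType) (I : finType) (p : I -> R) (g : I -> R) : R :=
  \sum_(i : I) p i * g i.

Definition mleval (R : realType) (n : nat) (fhat : {set 'I_n} -> R)
  (x : 'I_n -> R) : R :=
  \sum_(S : {set 'I_n}) fhat S * \prod_(i in S) x i.

Definition deg_le (R : realType) (n : nat) (fhat : {set 'I_n} -> R) (d : nat) : Prop :=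
  forall S : {set 'I_n}, fhat S != 0 -> (#|S| <= d)%N.

(* Pr_{x ~ X^{(x)n}} [ P (v o x) ] : product distribution on I^n. *)
Definition prod_prob (R : realType) (I : finType) (p : I -> R) (v : I -> R)
  (n : nat) (P : ('I_n -> R) -> bool) : R :=
  \sum_(w : {ffun 'I_n -> I} | P (fun j => v (w j))) \prod_(j < n) p (w j).

(* Main.v *)
Require Import Defs.
From mathcomp Require Import all_boot all_order all_algebra.
From mathcomp Require Import all_classical all_reals all_analysis.
From mathcomp Require Import polyrcf.
From mathcomp Require Import ring lra zify.
Set Implicit Arguments. Unset Strict Implicit. Unset Printing Implicit Defensive.
Import Order.TTheory GRing.Theory Num.Theory.
Local Open Scope ring_scope.
Section Cheb.
Variable R : realType.

Fixpoint chebp (k : nat) : {poly R} * {poly R} :=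
  if k is k'.+1 then ((chebp k').2, 2%:P * 'X * (chebp k').2 - (chebp k').1)
  else (1, 'X).
Definition cheb k := (chebp k).1.

Lemma cheb0 : cheb 0 = 1. Proof. by []. Qed.
Lemma cheb1 : cheb 1 = 'X. Proof. by []. Qed.
Lemma chebSS k : cheb k.+2 = 2%:P * 'X * cheb k.+1 - cheb k.
Proof. by []. Qed.

Lemma cheb_ind (P : nat -> Prop) : P 0%N -> P 1%N ->
  (forall k, P k -> P k.+1 -> P k.+2) -> forall k, P k.
Proof.
move=> P0 P1 PS k; suff: P k /\ P k.+1 by case.
by elim: k => [|k [IH1 IH2]]; split => //; apply: PS.
Qed.

Lemma coef2X (q : {poly R}) i : (2%:P * 'X * q)`_i = if i == 0%N then 0 else 2 * q`_i.-1.
Proof. by rewrite -mulrA coefCM coefXM; case: eqP => // _; rewrite mulr0. Qed.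

Lemma cheb_cos k x : (cheb k).[cos x] = cos (k%:R * x).
Proof.
elim/cheb_ind: k => [|| k IH1 IH2].
- by rewrite cheb0 hornerC mul0r cos0.
- by rewrite cheb1 hornerX mul1r.
rewrite chebSS !hornerE IH1 IH2.
have e1 : k.+2%:R * x = k.+1%:R * x + x by rewrite -[k.+2]addn1 natrD; ring.
have e2 : k%:R * x = k.+1%:R * x - x by rewrite -[k.+1]addn1 natrD; ring.
rewrite e1 e2 cosB cosD; ring.
Qed.

Lemma cheb_hi k i : (k < i)%N -> (cheb k)`_i = 0.
Proof.
elim/cheb_ind: k i => [|| k IH1 IH2] i ki.
- by rewrite cheb0 coefC; case: i ki.
- by rewrite cheb1 coefX; case: i ki => // -[].
rewrite chebSS coefB coef2X IH1; last by lia.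
case: i ki => // i ki /=; rewrite IH2 ?mulr0 ?subr0 //; lia.
Qed.

Lemma cheb_size k : (size (cheb k) <= k.+1)%N.
Proof. by apply/leq_sizeP => j kj; apply: cheb_hi. Qed.

Lemma cheb_c01 k : (cheb k)`_0 = (if odd k then 0 else (-1) ^+ k./2) /\
  (cheb k)`_1 = (if odd k then (-1) ^+ k./2 * k%:R else 0).
Proof.
elim/cheb_ind: k => [|| k [IH1 IH1'] [IH2 IH2']].
- by rewrite cheb0 !coefC.
- by rewrite cheb1 !coefX /= expr0 mul1r.
rewrite chebSS !coefB !coef2X /= IH1 IH1' IH2 /=.
case: (boolP (odd k)) => ok /=.
  rewrite uphalf_half ok /= add1n !exprS subrr; split => //.
  rewrite -[k.+2]addn2 natrD; ring.
rewrite exprS !mulr0 sub0r subr0; split => //; ring.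
Qed.

End Cheb.
Section Bern.
Variable R : realType.
Variable n : nat.
Hypothesis n0 : (0 < n)%N.

Definition ang k : R := k%:R * pi / n%:R.
Definition ynode k : R := cos (ang k).

Lemma nR0 : (n%:R : R) != 0. Proof. by rewrite pnatr_eq0 -lt0n. Qed.
Lemma nRgt0 : (0 : R) < n%:R. Proof. by rewrite ltr0n. Qed.

Lemma ang_itv k : (k <= n)%N -> ang k \in `[0, pi].
Proof.
move=> kn; rewrite in_itv /= /ang; apply/andP; split.
  by rewrite divr_ge0 ?mulr_ge0 ?ler0n // ltW // pi_gt0.
rewrite ler_pdivrMr ?nRgt0 // mulrC ler_pM2l ?pi_gt0 // ler_nat //.
Qed.

Lemma ang_lt k k' : (k < k')%N -> ang k < ang k'.
Proof.
move=> kk; rewrite /ang ltr_pM2r ?invr_gt0 ?nRgt0 // ltr_pM2r ?pi_gt0 // ltr_nat //.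
Qed.

Lemma ynode_lt k k' : (k < k')%N -> (k' <= n)%N -> ynode k' < ynode k.
Proof.
move=> kk k'n; rewrite /ynode ltr_cos ?ang_lt ?ang_itv //; apply: leq_trans k'n; exact: ltnW.
Qed.

Lemma ynode_le k k' : (k <= k')%N -> (k' <= n)%N -> ynode k' <= ynode k.
Proof.
rewrite leq_eqVlt => /orP [/eqP -> //|kk] k'n; exact/ltW/ynode_lt.
Qed.

Lemma cos_natpi k : cos (k%:R * pi) = (-1) ^+ k :> R.
Proof.
elim: k => [|k IH]; first by rewrite mul0r cos0.
rewrite exprS mulN1r -IH -cosDpi; congr cos.
by rewrite -[k.+1]addn1 natrD mulrDl mul1r.
Qed.

Lemma cheb_ynode k : (cheb R n).[ynode k] = (-1) ^+ k.
Proof.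
rewrite /ynode cheb_cos /ang -cos_natpi; congr cos.
by field; rewrite nR0.
Qed.

Lemma ynode_pos k : (k.*2 < n)%N -> 0 < ynode k.
Proof.
move=> kn; rewrite /ynode; apply: cos_gt0_pihalf; apply/andP; split.
  apply: lt_le_trans (_ : 0 <= _).
    by rewrite oppr_lt0 divr_gt0 ?pi_gt0.
  by rewrite /ang divr_ge0 ?mulr_ge0 ?ler0n // ltW // pi_gt0.
rewrite /ang ltr_pdivrMr ?nRgt0 //.
have h : (k.*2)%:R < n%:R :> R by rewrite ltr_nat.
rewrite -muln2 natrM in h; have := @pi_gt0 R; nra.
Qed.

Lemma ynode_neg k : (n < k.*2)%N -> (k <= n)%N -> ynode k < 0.
Proof.
move=> kn kn'; rewrite /ynode -(@cos_pihalf R) ltr_cos ?ang_itv //.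
  rewrite /ang ltr_pdivlMr ?nRgt0 //.
  have h : n%:R < (k.*2)%:R :> R by rewrite ltr_nat.
  rewrite -muln2 natrM in h; have := @pi_gt0 R; nra.
rewrite in_itv /=; have := @pi_gt0 R => ?; apply/andP; split; lra.
Qed.

Lemma ynode_itv k : -1 <= ynode k <= 1.
Proof. by rewrite cos_geN1 cos_le1. Qed.

End Bern.
Section Bern2.
Variable R : realType.

Lemma bern (m : nat) (q : {poly R}) : (size q <= m.*2.+2)%N -> q`_0 = 0 ->
  (forall x, -1 <= x <= 1 -> `|q.[x]| <= 1) -> q`_1 <= (m.*2.+1)%:R.
Proof.
set n := m.*2.+1 => sq q0 qb.
have n0 : (0 < n)%N by [].
rewrite leNgt; apply/negP => q1.
have q1p : 0 < q`_1 by apply: le_lt_trans q1; rewrite ler0n.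
set lam := n%:R / q`_1.
have lam0 : 0 < lam by rewrite divr_gt0 // ltr0n.
have lam1 : lam < 1 by rewrite ltr_pdivrMr // mul1r.
set eps : R := (-1) ^+ m.
have eps2 : eps * eps = 1 by rewrite -expr2 -exprM mulnC exprM sqrrN !expr1n.
set h := eps *: cheb R n - lam *: q.
have [c0 c1] := cheb_c01 R n.
have oddn : odd n by rewrite /n /= odd_double.
have n2 : n./2 = m by rewrite /n -divn2 -muln2 -addn1 divnMDl // addn0.
rewrite oddn n2 in c0 c1.
have h0 : h`_0 = 0 by rewrite coefB !coefZ c0 q0 !mulr0 subrr.
have h1 : h`_1 = 0.
  rewrite coefB !coefZ c1 mulrA eps2 mul1r /lam mulfVK //; last by rewrite gt_eqF.
  by rewrite subrr.
have hs : (size h <= n.+1)%N.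
  apply/leq_sizeP => j jn; rewrite coefB !coefZ cheb_hi //.
  by move/leq_sizeP: sq => -> //; rewrite !mulr0 subrr.
have hy k : (k <= n)%N -> 0 < eps * (-1) ^+ k * h.[ynode R n k].
  move=> kn; rewrite /h !hornerE cheb_ynode //.
  have e : eps * (-1) ^+ k * (eps * (-1) ^+ k) = 1.
    by rewrite mulrACA eps2 mul1r -expr2 -exprM mulnC exprM sqrrN !expr1n.
  have hb := qb _ (ynode_itv R n k).
  have ha : `|eps * (-1) ^+ k| = 1 by rewrite normrM !normrX normrN1 !expr1n mulr1.
  set u := eps * (-1) ^+ k in e ha *.
  set Q := q.[ynode R n k] in hb *.
  have : `|u * (lam * Q)| <= lam.
    by rewrite normrM ha mul1r normrM gtr0_norm // ler_piMr // ltW.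
  rewrite mulrBr mulrA e; move/ler_normlP => [H1 H2]; lra.
have : forall k, exists z, (k < n)%N -> ynode R n k.+1 < z < ynode R n k /\ root h z.
  move=> k; case: (ltnP k n) => kn; last by exists 0.
  have le : ynode R n k.+1 <= ynode R n k by apply: ynode_le.
  have neg : h.[ynode R n k.+1] * h.[ynode R n k] < 0.
    have A := hy _ kn; have B := hy _ (ltnW kn).
    set a := h.[_] in A; set b := h.[_] in B.
    have e : eps * (-1) ^+ k.+1 = - (eps * (-1) ^+ k) by rewrite exprS; ring.
    rewrite e in A; set u := eps * (-1) ^+ k in A B e.
    have u2 : u * u = 1 by rewrite /u mulrACA eps2 mul1r -expr2 -exprM mulnC exprM sqrrN !expr1n.
    have H := mulr_gt0 A B.
    have E : - u * a * (u * b) = - (a * b).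
      by rewrite -[RHS]mul1r -u2; ring.
    by rewrite E oppr_gt0 in H.
  have [z zi rz] := poly_ivtoo le neg.
  by exists z => _; rewrite in_itv /= in zi; rewrite zi.
case/choice => z hz.
pose kp := drop_poly 1 h.
have hx x : h.[x] = kp.[x] * x.
  have tk : take_poly 1 h = 0.
    by apply/polyP => i; rewrite coef_take_poly coef0; case: i => //.
  by rewrite -{1}(poly_take_drop 1 h) tk add0r expr1 hornerMX.
have kp0 : root kp 0 by rewrite /root horner_coef0 coef_drop_poly add0n h1.
have ks : (size kp <= n)%N by rewrite size_drop_poly; lia.
pose ks' := iota 0 m ++ iota m.+1 m.
have ksn k : k \in ks' -> (k < n)%N /\ k != m.
  rewrite mem_cat !mem_iota => /orP[] /andP[a b]; rewrite /n; split; lia.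
have znz k : k \in ks' -> z k != 0.
  move=> /ksn [kn km]; have [hz1 _] := hz k kn; case/andP: hz1 => a b.
  case: (ltnP k m) => km'.
    by rewrite gt_eqF // (lt_trans _ a) // ynode_pos //; rewrite /n; lia.
  by rewrite lt_eqF // (lt_trans b) // ynode_neg //; rewrite /n; lia.
have zroot k : k \in ks' -> root kp (z k).
  move=> kk; have [kn _] := ksn k kk; have [_ rz] := hz k kn.
  move: rz; rewrite /root hx mulf_eq0 (negbTE (znz k kk)) orbF; exact.
have zinj : {in ks' &, injective z}.
  have key k k' : (k < k')%N -> (k' < n)%N -> z k' < z k.
    move=> kk k'n; have [/andP[a1 a2] _] := hz k (ltn_trans kk k'n).
    have [/andP[b1 b2] _] := hz k' k'n.
    apply: lt_trans b2 _; apply: le_lt_trans a1; apply: ynode_le => //; exact: ltnW.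
  move=> k k' kk kk'; have [kn _] := ksn k kk; have [k'n _] := ksn k' kk'.
  move=> ezz; case: (ltngtP k k') => // c.
    by have := key _ _ c k'n; rewrite ezz ltxx.
  by have := key _ _ c kn; rewrite ezz ltxx.
pose rs := 0 :: map z ks'.
have rsu : uniq rs.
  rewrite /rs /= map_inj_in_uniq // cat_uniq !iota_uniq /= andbT.
  rewrite andbC; apply/andP; split.
    by apply/hasPn => k; rewrite !mem_iota => /andP[a _]; apply/negP => /andP[_ b]; lia.
  by apply/mapP => -[k kk /eqP]; rewrite eq_sym (negbTE (znz k kk)).
have rsr : all (root kp) rs.
  by rewrite /= kp0 /=; apply/allP => x /mapP [k kk ->]; apply: zroot.
have rss : size rs = n by rewrite /= size_map size_cat !size_iota /n; lia.
case: (eqVneq kp 0) => kp0'.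
  by have := hy 0%N (leq0n _); rewrite hx kp0' horner0 mul0r mulr0 ltxx.
have := max_poly_roots kp0' rsr rsu; rewrite rss => H.
by have := leq_trans H ks; rewrite ltnn.
Qed.

End Bern2.
Section Bern3.
Variable R : realType.

Lemma bern_exists (r : {poly R}) (d : nat) (tau sig : R) : (0 < d)%N ->
  (size r <= d.+1)%N -> 0 < tau -> r`_1 = 1 -> 4 * d%:R * tau < sig ->
  exists s, `|s| <= sig /\ tau <= `|r.[s]|.
Proof.
move=> d0 sr t0 r1 ts.
have s0 : 0 < sig by apply: le_lt_trans ts; rewrite !mulr_ge0 ?ler0n // ltW.
case: (pselect (exists s, `|s| <= sig /\ tau <= `|r.[s]|)) => // H; exfalso.
have Hs s : `|s| <= sig -> `|r.[s]| < tau.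
  move=> ss; rewrite ltNge; apply/negP => tr; apply: H; by exists s.
pose m := d./2.
have dm : (d <= m.*2.+1)%N by rewrite /m; have := odd_double_half d; case: (odd d) => /=; lia.
have md : (m.*2.+1 <= d.*2)%N by rewrite /m; have := odd_double_half d; case: (odd d) => /=; lia.
pose q := \poly_(i < m.*2.+2) (if i == 0%N then 0 else r`_i * sig ^+ i / (2 * tau)).
have sq : (size q <= m.*2.+2)%N by apply: size_poly.
have q0 : q`_0 = 0 by rewrite coef_poly.
have q1 : q`_1 = sig / (2 * tau) by rewrite coef_poly /= r1 mul1r expr1.
have qx x : q.[x] = (r.[sig * x] - r`_0) / (2 * tau).
  rewrite horner_poly (horner_coef_wide _ (_ : size r <= m.*2.+2)%N); last by apply: leq_trans sr _; lia.
  rewrite big_ord_recl [in RHS]big_ord_recl /= mul0r add0r expr0 mulr1 addrC addKr mulr_suml.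
  by apply: eq_bigr => i _; rewrite exprMn; field; rewrite gt_eqF.
have qb x : -1 <= x <= 1 -> `|q.[x]| <= 1.
  move=> /andP[x1 x2]; rewrite qx normrM normfV (gtr0_norm (_ : 0 < 2 * tau)) ?mulr_gt0 //.
  rewrite ler_pdivrMr ?mulr_gt0 // mul1r.
  have a : `|r.[sig * x]| < tau.
    apply: Hs; rewrite normrM gtr0_norm //; apply: ler_piMr; first exact: ltW.
    by apply/ler_normlP; split; lra.
  have b : `|r`_0| < tau by rewrite -horner_coef0; apply: Hs; rewrite normr0 ltW.
  apply: ltW; apply: le_lt_trans (ler_normB _ _) _; lra.
have := bern sq q0 qb; rewrite q1 ler_pdivrMr ?mulr_gt0 // => h.
have : (m.*2.+1)%:R <= (d.*2)%:R :> R by rewrite ler_nat.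
rewrite -[d.*2]muln2 natrM => h2.
have : sig <= 4 * d%:R * tau by apply: le_trans h _; nra.
by rewrite leNgt ts.
Qed.

End Bern3.
Section Prob.
Variable R : realFieldType.
Variable I : finType.
Variables p v : I -> R.
Hypothesis p_ge0 : forall i, 0 <= p i.
Hypothesis p_sum1 : \sum_i p i = 1.
Variable n : nat.

Definition Wt (w : {ffun 'I_n -> I}) : R := \prod_(j < n) p (w j).
Definition Ew (g : {ffun 'I_n -> I} -> R) : R := \sum_w Wt w * g w.

Lemma Wt_ge0 w : 0 <= Wt w.
Proof. by apply: prodr_ge0 => j _. Qed.

Lemma Ew_ext f g : (forall w, f w = g w) -> Ew f = Ew g.
Proof. by move=> H; apply: eq_bigr => w _; rewrite H. Qed.

Lemma Ew_prod (h : 'I_n -> I -> R) :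
  Ew (fun w => \prod_j h j (w j)) = \prod_j \sum_i p i * h j i.
Proof.
rewrite /Ew /Wt (bigA_distr_bigA (fun j i => p i * h j i)) /=.
by apply: eq_bigr => w _; rewrite big_split.
Qed.

Lemma Ew1 : Ew (fun _ => 1) = 1.
Proof.
transitivity (Ew (fun w => \prod_(j < n) (fun _ _ => 1 : R) j (w j))).
  by apply: Ew_ext => w; rewrite big1.
rewrite (Ew_prod (fun _ _ => 1)); apply: big1 => j _.
by under eq_bigr do rewrite mulr1.
Qed.

Lemma EwD f g : Ew (fun w => f w + g w) = Ew f + Ew g.
Proof. by rewrite /Ew -big_split; apply: eq_bigr => w _; rewrite mulrDr. Qed.

Lemma EwZ c f : Ew (fun w => c * f w) = c * Ew f.
Proof. by rewrite /Ew mulr_sumr; apply: eq_bigr => w _; rewrite mulrCA. Qed.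

Lemma EwC c : Ew (fun _ => c) = c.
Proof. by rewrite -[c]mulr1 (EwZ c (fun _ => 1)) Ew1. Qed.

Lemma EwB f g : Ew (fun w => f w - g w) = Ew f - Ew g.
Proof.
rewrite (Ew_ext (g := fun w => f w + (-1) * g w)); last by move=> w; ring.
by rewrite EwD EwZ mulN1r.
Qed.

Lemma Ew_sum (J : finType) (G : J -> {ffun 'I_n -> I} -> R) :
  Ew (fun w => \sum_k G k w) = \sum_k Ew (G k).
Proof.
rewrite /Ew; under eq_bigr do rewrite mulr_sumr.
by rewrite exchange_big.
Qed.

Lemma Ew_le f g : (forall w, f w <= g w) -> Ew f <= Ew g.
Proof. by move=> H; apply: ler_sum => w _; apply: ler_wpM2l; [apply: Wt_ge0|apply: H]. Qed.

Lemma Ew_ge0 f : (forall w, 0 <= f w) -> 0 <= Ew f.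
Proof. by move=> H; rewrite -(EwC 0); apply: Ew_le. Qed.

Definition upd (w : {ffun 'I_n -> I}) (j : 'I_n) (y : I) : {ffun 'I_n -> I} :=
  [ffun k => if k == j then y else w k].

Lemma Ew_resample j F : Ew (fun w => \sum_y p y * F (upd w j y)) = Ew F.
Proof.
pose Wj (w : {ffun 'I_n -> I}) := \prod_(k < n | k != j) p (w k).
have WE w : Wt w = p (w j) * Wj w by rewrite /Wt (bigD1 j).
have WjU w y : Wj (upd w j y) = Wj w.
  by apply: eq_bigr => k kj; rewrite ffunE (negbTE kj).
have uu w y : upd (upd w j y) j (w j) = w.
  by apply/ffunP => k; rewrite !ffunE; case: eqP => // ->.
rewrite /Ew.
transitivity (\sum_(u : {ffun 'I_n -> I} * I) Wt u.1 * (p u.2 * F (upd u.1 j u.2))).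
  rewrite -(pair_bigA _ (fun w y => Wt w * (p y * F (upd w j y)))) /=.
  by apply: eq_bigr => w _; rewrite mulr_sumr.
pose g (u : {ffun 'I_n -> I} * I) := (upd u.1 j u.2, u.1 j).
have ginj : injective g.
  move=> [w1 y1] [w2 y2] [e1 e2] /=.
  have ey : y1 = y2 by have := congr1 (fun f : {ffun 'I_n -> I} => f j) e1; rewrite /= !ffunE eqxx.
  subst y2; congr pair; rewrite -(uu w1 y1) -(uu w2 y1) e1 e2 //.
rewrite (reindex_inj ginj) /=.
rewrite -(pair_bigA _ (fun w y => Wt (upd w j y) * (p (w j) * F (upd (upd w j y) j (w j))))) /=.
apply: eq_bigr => w _.
under eq_bigr do rewrite uu WE WjU ffunE eqxx.
rewrite -mulr_suml -mulr_suml p_sum1 mul1r WE; ring.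
Qed.

Definition indep j (G : {ffun 'I_n -> I} -> R) := forall w y, G (upd w j y) = G w.

Lemma Ew_indep j G h : indep j G ->
  Ew (fun w => G w * h (w j)) = Ew G * \sum_y p y * h y.
Proof.
move=> GU; rewrite -(Ew_resample j (fun w => G w * h (w j))).
rewrite /Ew mulr_suml; apply: eq_bigr => w _.
rewrite -mulrA; congr (_ * _); rewrite mulr_sumr; apply: eq_bigr => y _.
by rewrite GU ffunE eqxx; ring.
Qed.

Lemma Ew_CS f g : Ew (fun w => f w * g w) ^+ 2 <= Ew (fun w => f w ^+ 2) * Ew (fun w => g w ^+ 2).
Proof.
set a := Ew (fun w => f w ^+ 2); set b := Ew (fun w => g w ^+ 2); set c := Ew (fun w => f w * g w).
have a0 : 0 <= a by apply: Ew_ge0 => w; apply: sqr_ge0.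
have b0 : 0 <= b by apply: Ew_ge0 => w; apply: sqr_ge0.
have quad (x y : R) : 0 <= x ^+ 2 * a - 2 * x * y * c + y ^+ 2 * b.
  have -> : x ^+ 2 * a - 2 * x * y * c + y ^+ 2 * b = Ew (fun w => (x * f w - y * g w) ^+ 2).
    rewrite (Ew_ext (g := fun w => x ^+ 2 * f w ^+ 2 - (2 * x * y) * (f w * g w) + y ^+ 2 * g w ^+ 2)); last by move=> w; ring.
    by rewrite EwD EwB !EwZ.
  by apply: Ew_ge0 => w; apply: sqr_ge0.
have h3 := quad 1 1; have h4 := quad 1 (-1).
case: (ltrgt0P a) => ha.
- have e : c ^+ 2 * a - 2 * c * a * c + a ^+ 2 * b = a * (a * b - c ^+ 2) by ring.
  have := quad c a; rewrite e.
  by rewrite pmulr_rge0 // subr_ge0.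
- by move: ha; rewrite ltNge a0.
case: (ltrgt0P b) => hb.
- have e : b ^+ 2 * a - 2 * b * c * c + c ^+ 2 * b = b * (a * b - c ^+ 2) by ring.
  have := quad b c; rewrite e.
  by rewrite pmulr_rge0 // subr_ge0.
- by move: hb; rewrite ltNge b0.
have c0 : c = 0 by subst a b; lra.
by rewrite c0 ha hb expr0n mulr0.
Qed.

Definition mlev (F : {set 'I_n} -> R) (x : 'I_n -> R) : R :=
  \sum_(S : {set 'I_n}) F S * \prod_(i in S) x i.
Definition ev F (w : {ffun 'I_n -> I}) := mlev F (fun j => v (w j)).
Definition splA (j : 'I_n) (F : {set 'I_n} -> R) : {set 'I_n} -> R :=
  fun S => if j \in S then 0 else F S.
Definition splB (j : 'I_n) (F : {set 'I_n} -> R) : {set 'I_n} -> R :=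
  fun S => if j \in S then 0 else F (j |: S).

Lemma mlev_split j F x : mlev F x = mlev (splA j F) x + x j * mlev (splB j F) x.
Proof.
rewrite /mlev (bigID (fun S : {set 'I_n} => j \in S)) /= addrC; congr (_ + _).
  rewrite [RHS](bigID (fun S : {set 'I_n} => j \in S)) /= [X in _ = X + _]big1 ?add0r; last first.
    by move=> S jS; rewrite /splA jS mul0r.
  by apply: eq_bigr => S /negbTE jS; rewrite /splA jS.
rewrite mulr_sumr [RHS](bigID (fun S : {set 'I_n} => j \in S)) /= [X in _ = X + _]big1 ?add0r; last first.
  by move=> S jS; rewrite /splB jS mul0r mulr0.
rewrite (reindex_onto (fun S => j |: S) (fun S => S :\ j)) /=; last first.
  by move=> S jS; rewrite finset.setD1K.
apply: eq_big => S.
  rewrite setU11 /=; case: (boolP (j \in S)) => jS.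
    apply/negbTE; apply/negP => /eqP e.
    by have := jS; rewrite -e !inE eqxx.
  by rewrite setU1K // eqxx.
move=> /andP[_ /eqP e]; have jS : j \notin S by rewrite -e setD11.
rewrite /splB (negbTE jS) big_setU1 //=; ring.
Qed.

Lemma ev_split j F w : ev F w = ev (splA j F) w + v (w j) * ev (splB j F) w.
Proof. exact: mlev_split. Qed.

Lemma ev_indep j (F : {set 'I_n} -> R) : (forall S : {set 'I_n}, j \in S -> F S = 0) -> indep j (ev F).
Proof.
move=> H w y; rewrite /ev /mlev; apply: eq_bigr => S _.
case: (boolP (j \in S)) => jS; first by rewrite H // !mul0r.
congr (_ * _); apply: eq_bigr => i iS; rewrite ffunE.
case: eqP => // ij; by rewrite -ij iS in jS.
Qed.

Lemma splA_j j F (S : {set 'I_n}) : j \in S -> splA j F S = 0.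
Proof. by rewrite /splA => ->. Qed.
Lemma splB_j j F (S : {set 'I_n}) : j \in S -> splB j F S = 0.
Proof. by rewrite /splB => ->. Qed.

Definition supp (F : {set 'I_n} -> R) (V : {set 'I_n}) := forall S, F S != 0 -> S \subset V.
Definition degl (F : {set 'I_n} -> R) d := forall S : {set 'I_n}, F S != 0 -> (#|S| <= d)%N.

Lemma supp_splA j F V : supp F V -> supp (splA j F) (V :\ j).
Proof.
move=> H S; rewrite /splA; case: (boolP (j \in S)) => jS; first by rewrite eqxx.
by move=> /H SV; rewrite subsetD1 SV jS.
Qed.

Lemma supp_splB j F V : supp F V -> supp (splB j F) (V :\ j).
Proof.
move=> H S; rewrite /splB; case: (boolP (j \in S)) => jS; first by rewrite eqxx.
move=> /H SV; rewrite subsetD1 jS andbT; apply: fintype.subset_trans SV.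
exact: finset.subsetUr.
Qed.

Lemma degl_splA j F d : degl F d -> degl (splA j F) d.
Proof.
move=> H S; rewrite /splA; case: (boolP (j \in S)) => jS; first by rewrite eqxx.
exact: H.
Qed.

Lemma degl_splB j F d : degl F d.+1 -> degl (splB j F) d.
Proof.
move=> H S; rewrite /splB; case: (boolP (j \in S)) => jS; first by rewrite eqxx.
by move=> /H; rewrite cardsU1 jS.
Qed.

Lemma splB_deg0 j F : degl F 0 -> forall S, splB j F S = 0.
Proof.
move=> H S; rewrite /splB; case: (boolP (j \in S)) => jS //.
apply/eqP; rewrite -[_ == 0]negbK; apply/negP => /H.
by rewrite cardsU1 jS.
Qed.

Lemma ev0 F : (forall S, F S = 0) -> forall w, ev F w = 0.
Proof. by move=> H w; rewrite /ev /mlev big1 // => S _; rewrite H mul0r. Qed.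

Lemma ev_supp0 F : supp F finset.set0 -> forall w, ev F w = F finset.set0.
Proof.
move=> H w; rewrite /ev /mlev (bigD1 finset.set0) //= big_set0 mulr1 big1 ?addr0 //.
move=> S SS; apply/eqP; apply/negP => /negP; rewrite mulf_eq0 negb_or => /andP[/H].
by rewrite finset.subset0 (negbTE SS).
Qed.
Hypothesis hm1 : \sum_i p i * v i = 0.
Hypothesis hm2 : \sum_i p i * v i ^+ 2 = 1.
Definition m3 := \sum_i p i * v i ^+ 3.
Definition m4 := \sum_i p i * v i ^+ 4.
Definition cB := 3 + `|m3| + m4.

Lemma m4_ge0 : 0 <= m4.
Proof. by apply: sumr_ge0 => i _; rewrite mulr_ge0 // -[4%N]/(2 * 2)%N exprM sqr_ge0. Qed.

Lemma cB_ge3 : 3 <= cB.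
Proof. by rewrite /cB -addrA lerDl addr_ge0 ?m4_ge0. Qed.

Lemma indepM j G H : indep j G -> indep j H -> indep j (fun w => G w * H w).
Proof. by move=> hG hH w y; rewrite hG hH. Qed.

Lemma indepX j G k : indep j G -> indep j (fun w => G w ^+ k).
Proof. by move=> hG w y; rewrite hG. Qed.

Lemma Ew_indep0 j G : indep j G -> Ew (fun w => G w * v (w j)) = 0.
Proof. by move=> hG; rewrite (@Ew_indep j G (fun y => v y) hG) hm1 mulr0. Qed.

Lemma split_moments j F :
  let A := ev (splA j F) in let B := ev (splB j F) in
  Ew (fun w => ev F w ^+ 2) = Ew (fun w => A w ^+ 2) + Ew (fun w => B w ^+ 2) /\
  Ew (fun w => ev F w ^+ 4) = Ew (fun w => A w ^+ 4) + 6 * Ew (fun w => A w ^+ 2 * B w ^+ 2)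
     + 4 * m3 * Ew (fun w => A w * B w ^+ 3) + m4 * Ew (fun w => B w ^+ 4).
Proof.
move=> A B.
have iA : indep j A := ev_indep (@splA_j j F).
have iB : indep j B := ev_indep (@splB_j j F).
split.
  rewrite (Ew_ext (g := fun w => A w ^+ 2 + ((2 * A w * B w) * v (w j) + B w ^+ 2 * (fun y => v y ^+ 2) (w j)))); last first.
    by move=> w; rewrite (ev_split j) -/A -/B /=; ring.
  rewrite !EwD Ew_indep0; last by move=> w y; rewrite iA iB.
  rewrite (@Ew_indep j _ (fun y => v y ^+ 2) (indepX 2 iB)) hm2; ring.
rewrite (Ew_ext (g := fun w => A w ^+ 4 + ((4 * A w ^+ 3 * B w) * v (w j) +
   ((6 * (A w ^+ 2 * B w ^+ 2)) * (fun y => v y ^+ 2) (w j) +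
   ((4 * (A w * B w ^+ 3)) * (fun y => v y ^+ 3) (w j) +
    B w ^+ 4 * (fun y => v y ^+ 4) (w j)))))); last first.
  by move=> w; rewrite (ev_split j) -/A -/B /=; ring.
rewrite !EwD Ew_indep0; last by move=> w y; rewrite iA iB.
rewrite (@Ew_indep j _ (fun y => v y ^+ 4) (indepX 4 iB)).
rewrite (@Ew_indep j (fun w => 6 * (A w ^+ 2 * B w ^+ 2)) (fun y => v y ^+ 2)); last first.
  by move=> w y; rewrite iA iB.
rewrite (@Ew_indep j (fun w => 4 * (A w * B w ^+ 3)) (fun y => v y ^+ 3)); last first.
  by move=> w y; rewrite iA iB.
rewrite hm2 !EwZ -/m3 -/m4; ring.
Qed.

Lemma bonami_ind m : forall (V : {set 'I_n}) F d, #|V| = m -> supp F V -> degl F d ->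
  Ew (fun w => ev F w ^+ 4) <= cB ^+ (2 * d) * Ew (fun w => ev F w ^+ 2) ^+ 2.
Proof.
have cB1 : 1 <= cB by apply: le_trans cB_ge3; rewrite ler1n.
elim: m => [|m IH] V F d cV sF dF.
  have V0 : V = finset.set0 by apply/eqP; rewrite -cards_eq0 cV.
  subst V; have e := ev_supp0 sF.
  rewrite (Ew_ext (g := fun _ => F finset.set0 ^+ 4)) ?EwC; last by move=> w; rewrite e.
  rewrite (Ew_ext (g := fun _ => F finset.set0 ^+ 2)) ?EwC; last by move=> w; rewrite e.
  rewrite -exprM; apply: ler_peMl; last exact: exprn_ege1.
  by rewrite -[4%N]/(2 * 2)%N exprM sqr_ge0.
have [j jV] : exists j, j \in V by apply/card_gt0P; rewrite cV.
have cV' : #|V :\ j| = m by move: cV; rewrite (cardsD1 j V) jV add1n => -[].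
have [E2 E4] := split_moments j F.
set A := ev (splA j F) in E2 E4; set B := ev (splB j F) in E2 E4.
have sA := supp_splA (j:=j) sF; have sB := supp_splB (j:=j) sF.
case: d dF => [|d] dF.
  have B0 w : B w = 0 by apply: ev0; apply: splB_deg0.
  have fA w : ev F w = A w by rewrite (ev_split j) -/A -/B B0 mulr0 addr0.
  rewrite (Ew_ext (f := fun w => ev F w ^+ 4) (g := fun w => A w ^+ 4)); last by move=> w; rewrite fA.
  rewrite (Ew_ext (f := fun w => ev F w ^+ 2) (g := fun w => A w ^+ 2)); last by move=> w; rewrite fA.
  exact: (IH _ _ _ cV' sA (degl_splA (j:=j) dF)).
have IHA := IH _ _ _ cV' sA (degl_splA (j:=j) dF).
have IHB := IH _ _ _ cV' sB (degl_splB (j:=j) dF).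
rewrite -/A in IHA; rewrite -/B in IHB.
rewrite E2 E4.
set a := Ew (fun w => A w ^+ 2) in IHA *; set b := Ew (fun w => B w ^+ 2) in IHB *.
set a4 := Ew (fun w => A w ^+ 4) in IHA *; set b4 := Ew (fun w => B w ^+ 4) in IHB *.
set e22 := Ew (fun w => A w ^+ 2 * B w ^+ 2); set e13 := Ew (fun w => A w * B w ^+ 3).
have a0 : 0 <= a by apply: Ew_ge0 => w; apply: sqr_ge0.
have b0 : 0 <= b by apply: Ew_ge0 => w; apply: sqr_ge0.
have e220 : 0 <= e22 by apply: Ew_ge0 => w; rewrite mulr_ge0 ?sqr_ge0.
have CS : e22 ^+ 2 <= a4 * b4.
  have := Ew_CS (fun w => A w ^+ 2) (fun w => B w ^+ 2).
  by rewrite -/e22 (Ew_ext (f := fun w => (A w ^+ 2) ^+ 2) (g := fun w => A w ^+ 4)) ?(Ew_ext (f := fun w => (B w ^+ 2) ^+ 2) (g := fun w => B w ^+ 4)) // => w; rewrite -exprM.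
have e13u : e13 <= (e22 + b4) / 2.
  rewrite -EwD -[_ / 2]mulrC -EwZ; apply: Ew_le => w.
  have : 0 <= B w ^+ 2 * (A w - B w) ^+ 2 by rewrite mulr_ge0 ?sqr_ge0.
  lra.
have e13l : - e13 <= (e22 + b4) / 2.
  rewrite -EwD -[_ / 2]mulrC -EwZ -mulN1r -EwZ; apply: Ew_le => w.
  have : 0 <= B w ^+ 2 * (A w + B w) ^+ 2 by rewrite mulr_ge0 ?sqr_ge0.
  lra.
set C := cB ^+ (2 * d).
have cB0 : 0 < cB := lt_le_trans ltr01 cB1.
have C0 : 0 < C by rewrite exprn_gt0.
have eC : cB ^+ (2 * d.+1) = C * cB ^+ 2 by rewrite /C mulnS addnC exprD.
rewrite eC in IHA *.
have e22b : e22 <= C * cB * a * b.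
  have h1 : e22 ^+ 2 <= (C * cB * a * b) ^+ 2.
    apply: le_trans CS _.
    have -> : (C * cB * a * b) ^+ 2 = (C * cB ^+ 2 * a ^+ 2) * (C * b ^+ 2) by ring.
    apply: ler_pM; [| |exact: IHA|exact: IHB].
      by apply: Ew_ge0 => w; rewrite -[4%N]/(2 * 2)%N exprM sqr_ge0.
    by apply: Ew_ge0 => w; rewrite -[4%N]/(2 * 2)%N exprM sqr_ge0.
  have X0 : 0 <= C * cB * a * b by rewrite !mulr_ge0 // ltW.
  by rewrite -(ler_pXn2r (_ : (0 < 2)%N)) // nnegrE.
have m30 := normr_ge0 m3; have m40 := m4_ge0.
have hm3 : 4 * m3 * e13 <= 2 * `|m3| * (e22 + b4).
  case: (ler0P m3) => hm; nra.
have k1 : (6 + 2 * `|m3|) * e22 <= 2 * cB * (C * cB * a * b).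
  apply: le_trans (ler_wpM2l _ e22b) _; first lra.
  have X0 : 0 <= C * cB * a * b by rewrite !mulr_ge0 // ltW.
  apply: ler_wpM2r => //; rewrite /cB; lra.
have k2 : (2 * `|m3| + m4) * b4 <= cB ^+ 2 * (C * b ^+ 2).
  apply: le_trans (ler_wpM2l _ IHB) _; first lra.
  apply: ler_wpM2r; first by rewrite mulr_ge0 ?sqr_ge0 // ltW.
  have := cB_ge3; rewrite /cB => h; nra.
have : a4 + 6 * e22 + 4 * m3 * e13 + m4 * b4 <= a4 + (6 + 2 * `|m3|) * e22 + (2 * `|m3| + m4) * b4.
  lra.
move=> h; apply: (le_trans h).
have -> : C * cB ^+ 2 * (a + b) ^+ 2 = C * cB ^+ 2 * a ^+ 2 + 2 * cB * (C * cB * a * b) + cB ^+ 2 * (C * b ^+ 2) by ring.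
lra.
Qed.

Lemma bonami F d : degl F d ->
  Ew (fun w => ev F w ^+ 4) <= cB ^+ (2 * d) * Ew (fun w => ev F w ^+ 2) ^+ 2.
Proof. by move=> dF; apply: (bonami_ind (V := [set: 'I_n]%SET)) => // S _; apply: finset.subsetT. Qed.

Definition phi (th : 'I_n -> R) (w : {ffun 'I_n -> I}) := \prod_j (1 + th j * v (w j)).

Lemma Ew_mono_phi (S : {set 'I_n}) th :
  Ew (fun w => (\prod_(i in S) v (w i)) * phi th w) = \prod_(i in S) th i.
Proof.
rewrite (Ew_ext (g := fun w => \prod_j (fun j y => (if j \in S then v y else 1) * (1 + th j * v y)) j (w j))); last first.
  by move=> w; rewrite /phi big_split /= big_mkcond.
rewrite (Ew_prod (fun j y => (if j \in S then v y else 1) * (1 + th j * v y))).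
rewrite [RHS]big_mkcond; apply: eq_bigr => j _ /=.
case: (j \in S).
  rewrite (eq_bigr (fun i => p i * v i + th j * (p i * v i ^+ 2))); last by move=> i _; ring.
  by rewrite big_split /= -mulr_sumr hm1 hm2 add0r mulr1.
rewrite (eq_bigr (fun i => p i + th j * (p i * v i))); last by move=> i _; ring.
by rewrite big_split /= -mulr_sumr hm1 p_sum1 mulr0 addr0.
Qed.

Lemma Ew_ev_phi F th : Ew (fun w => ev F w * phi th w) = mlev F th.
Proof.
rewrite (Ew_ext (g := fun w => \sum_S F S * ((\prod_(i in S) v (w i)) * phi th w))); last first.
  by move=> w; rewrite /ev /mlev mulr_suml; apply: eq_bigr => S _; rewrite mulrA.
by rewrite Ew_sum; apply: eq_bigr => S _; rewrite EwZ Ew_mono_phi.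
Qed.

Lemma Ew_phi th : Ew (phi th) = 1.
Proof.
have := Ew_mono_phi finset.set0 th; rewrite big_set0 => <-.
by apply: Ew_ext => w; rewrite big_set0 mul1r.
Qed.

Definition bet := 6 + 4 * `|m3| + m4.

Lemma Ew_phi4 th : (forall j, `|th j| <= 1) ->
  Ew (fun w => phi th w ^+ 4) <= \prod_j (1 + bet * th j ^+ 2).
Proof.
move=> hth.
rewrite (Ew_ext (g := fun w => \prod_j (fun j y => (1 + th j * v y) ^+ 4) j (w j))); last first.
  by move=> w; rewrite /phi prodrXl.
rewrite (Ew_prod (fun j y => (1 + th j * v y) ^+ 4)).
apply: ler_prod => j _ /=; apply/andP; split.
  by apply: sumr_ge0 => i _; rewrite mulr_ge0 // -[4%N]/(2 * 2)%N exprM sqr_ge0.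
set x := th j.
rewrite (eq_bigr (fun i => p i + (4 * x) * (p i * v i) + (6 * x ^+ 2) * (p i * v i ^+ 2)
   + (4 * x ^+ 3) * (p i * v i ^+ 3) + x ^+ 4 * (p i * v i ^+ 4))); last by move=> i _; ring.
rewrite !big_split /= -!mulr_sumr p_sum1 hm1 hm2 -/m3 -/m4.
have hx := hth j; rewrite -/x in hx.
have x2 : x ^+ 2 <= 1 by rewrite -(expr1n _ 2) -real_normK ?num_real // ler_pXn2r // nnegrE.
have x20 : 0 <= x ^+ 2 := sqr_ge0 x.
have h4 : x ^+ 4 * m4 <= x ^+ 2 * m4.
  apply: ler_wpM2r; first exact: m4_ge0.
  rewrite -[4%N]/(2 + 2)%N exprD; apply: ler_piMr => //.
have h3 : x ^+ 3 * m3 <= x ^+ 2 * `|m3|.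
  apply: le_trans (ler_norm _) _; rewrite normrM normrX.
  have ax0 := normr_ge0 x.
  have ax3 : `|x| ^+ 3 <= x ^+ 2.
    rewrite -real_normK ?num_real // exprS.
    have : 0 <= `|x| ^+ 2 := sqr_ge0 _.
    nra.
  by apply: ler_wpM2r => //; apply: normr_ge0.
have := m4_ge0; have := normr_ge0 m3; rewrite /bet; nra.
Qed.

Lemma antic F d th t : 0 < t -> (forall j i, `|th j * v i| <= 1) -> (forall j, `|th j| <= 1) ->
  degl F d -> 2 * t <= `|mlev F th| ->
  1 <= 16 * (cB ^+ (2 * d)) ^+ 2 * (\prod_j (1 + bet * th j ^+ 2)) *
       Ew (fun w => if t <= `|ev F w| then 1 else 0) ^+ 2.
Proof.
move=> t0 hv hth dF hm.
set f := ev F; set ph := phi th.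
set ind := fun w => if t <= `|f w| then 1 else 0 : R.
set Pr := Ew ind.
set Phi := \prod_j (1 + bet * th j ^+ 2).
set C := cB ^+ (2 * d).
have cB1 : 1 <= cB by apply: le_trans cB_ge3; rewrite ler1n.
have C1 : 1 <= C by apply: exprn_ege1.
have bet0 : 0 <= bet by rewrite /bet addr_ge0 ?m4_ge0 // addr_ge0 // mulr_ge0 // normr_ge0.
have Phi1 : 1 <= Phi.
  rewrite /Phi; elim/big_ind: _ => //.
    by move=> x y x1 y1; rewrite -[1]mulr1; apply: ler_pM => //; rewrite ler01.
  by move=> j _; rewrite lerDl mulr_ge0 ?sqr_ge0.
have ph0 w : 0 <= ph w.
  apply: prodr_ge0 => j _; have := hv j (w j); move/ler_normlP => [h1 h2]; lra.
have ind01 w : 0 <= ind w <= 1 by rewrite /ind; case: ifP => _; rewrite ?lexx ?ler01.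
have ind2 w : ind w ^+ 2 = ind w by rewrite /ind; case: ifP => _; rewrite ?expr1n ?expr0n.
have Pr0 : 0 <= Pr by apply: Ew_ge0 => w; case/andP: (ind01 w).
have E4ph : Ew (fun w => ph w ^+ 4) <= Phi by apply: Ew_phi4.
have Ef4 : Ew (fun w => f w ^+ 4) <= C * Ew (fun w => f w ^+ 2) ^+ 2 by apply: bonami.
have f40 : 0 <= Ew (fun w => f w ^+ 4).
  by apply: Ew_ge0 => w; rewrite -[4%N]/(2 * 2)%N exprM sqr_ge0.
have S1 : t <= `|Ew (fun w => f w * ph w * ind w)|.
  have split : Ew (fun w => f w * ph w) = Ew (fun w => f w * ph w * ind w) + Ew (fun w => f w * ph w * (1 - ind w)).
    by rewrite -EwD; apply: Ew_ext => w; ring.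
  have b1 : `|Ew (fun w => f w * ph w * (1 - ind w))| <= t.
    have pw w : `|f w * ph w * (1 - ind w)| <= t * ph w.
      rewrite /ind; case: ifP => h; first by rewrite subrr mulr0 normr0 mulr_ge0 // ltW.
      rewrite subr0 mulr1 normrM (ger0_norm (ph0 w)) ler_wpM2r //.
      by apply: ltW; rewrite ltNge h.
    have Et : Ew (fun w => t * ph w) = t by rewrite EwZ Ew_phi mulr1.
    have Emt : Ew (fun w => (-1) * (t * ph w)) = - t by rewrite EwZ Et mulN1r.
    have U : Ew (fun w => f w * ph w * (1 - ind w)) <= Ew (fun w => t * ph w).
      by apply: Ew_le => w; have := pw w; move/ler_normlP => [h1 h2]; lra.
    have L : Ew (fun w => (-1) * (t * ph w)) <= Ew (fun w => f w * ph w * (1 - ind w)).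
      by apply: Ew_le => w; have := pw w; move/ler_normlP => [h1 h2]; lra.
    rewrite Et in U; rewrite Emt in L; apply/ler_normlP; split; lra.
  rewrite /ph Ew_ev_phi in split; rewrite split in hm.
  have := ler_normD (Ew (fun w => f w * ph w * ind w)) (Ew (fun w => f w * ph w * (1 - ind w))).
  lra.
have S2 : Ew (fun w => f w * ph w * ind w) ^+ 2 <= Ew (fun w => f w ^+ 2 * ph w ^+ 2) * Pr.
  have := Ew_CS (fun w => f w * ph w) ind.
  rewrite (Ew_ext (f := fun w => ind w ^+ 2) (g := ind)) // (Ew_ext (f := fun w => (f w * ph w) ^+ 2) (g := fun w => f w ^+ 2 * ph w ^+ 2)) //.
  by move=> w; rewrite exprMn.
have S3 : Ew (fun w => f w ^+ 2 * ph w ^+ 2) ^+ 2 <= Ew (fun w => f w ^+ 4) * Ew (fun w => ph w ^+ 4).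
  have := Ew_CS (fun w => f w ^+ 2) (fun w => ph w ^+ 2).
  rewrite (Ew_ext (f := fun w => (f w ^+ 2) ^+ 2) (g := fun w => f w ^+ 4)); last by move=> w; rewrite -exprM.
  by rewrite (Ew_ext (f := fun w => (ph w ^+ 2) ^+ 2) (g := fun w => ph w ^+ 4)) // => w; rewrite -exprM.
set X := Ew (fun w => f w * ph w * ind w) in S1 S2.
set Y := Ew (fun w => f w ^+ 2 * ph w ^+ 2) in S2 S3.
set V := Ew (fun w => f w ^+ 2) in Ef4.
set F4 := Ew (fun w => f w ^+ 4) in Ef4 S3 f40.
set P4 := Ew (fun w => ph w ^+ 4) in S3 E4ph.
have Y0 : 0 <= Y by apply: Ew_ge0 => w; rewrite mulr_ge0 ?sqr_ge0.
have V0 : 0 <= V by apply: Ew_ge0 => w; rewrite sqr_ge0.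
have P40 : 0 <= P4 by apply: Ew_ge0 => w; rewrite -[4%N]/(2 * 2)%N exprM sqr_ge0.
have T4 : t ^+ 4 <= F4 * P4 * Pr ^+ 2.
  have a1 : t ^+ 2 <= X ^+ 2.
    have := real_normK (num_real X); nra.
  have a2 : t ^+ 2 <= Y * Pr := le_trans a1 S2.
  have a3 : (t ^+ 2) ^+ 2 <= (Y * Pr) ^+ 2 by rewrite ler_pXn2r // nnegrE ?sqr_ge0 // (le_trans _ a2) ?sqr_ge0.
  rewrite -[4%N]/(2 * 2)%N exprM; apply: (le_trans a3).
  rewrite exprMn; apply: ler_wpM2r; first by apply: sqr_ge0.
  by apply: le_trans S3 _.
have S5 : V <= t ^+ 2 + Ew (fun w => f w ^+ 2 * ind w).
  rewrite -[t ^+ 2]mulr1 -Ew1 -EwZ -EwD; apply: Ew_le => w.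
  rewrite /ind; case: ifP => h; first by rewrite !mulr1 lerDr sqr_ge0.
  have h' : `|f w| < t by rewrite ltNge h.
  have := real_normK (num_real (f w)); have := normr_ge0 (f w).
  rewrite mulr0 addr0 mulr1; nra.
have S6 : Ew (fun w => f w ^+ 2 * ind w) ^+ 2 <= F4 * Pr.
  have := Ew_CS (fun w => f w ^+ 2) ind.
  rewrite (Ew_ext (f := fun w => ind w ^+ 2) (g := ind)) //.
  by rewrite (Ew_ext (f := fun w => (f w ^+ 2) ^+ 2) (g := fun w => f w ^+ 4)) // => w; rewrite -exprM.
set Z := Ew (fun w => f w ^+ 2 * ind w) in S5 S6.
have C0 : 0 < C by apply: lt_le_trans C1.
case: (lerP (2 * t ^+ 2) V) => hV.
  have Vp : 0 < V by apply: lt_le_trans hV; rewrite mulr_gt0 // exprn_gt0.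
  have hZ : V / 2 <= Z by lra.
  have h1 : (V / 2) ^+ 2 <= C * V ^+ 2 * Pr.
    have hZ2 : (V / 2) ^+ 2 <= Z ^+ 2.
      have : 0 <= V / 2 by rewrite divr_ge0.
      nra.
    exact: (le_trans hZ2 (le_trans S6 (ler_wpM2r Pr0 Ef4))).
  have h2 : 1 <= 4 * C * Pr.
    have e : (V / 2) ^+ 2 = V ^+ 2 / 4 by field.
    rewrite e ler_pdivrMr // in h1.
    have V2 : 0 < V ^+ 2 by rewrite exprn_gt0.
    nra.
  have h3 : 1 <= (4 * C * Pr) ^+ 2 by nra.
  apply: (le_trans h3).
  have -> : (4 * C * Pr) ^+ 2 = 16 * C ^+ 2 * 1 * Pr ^+ 2 by ring.
  apply: ler_wpM2r; first exact: sqr_ge0.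
  by apply: ler_wpM2l; [rewrite mulr_ge0 ?sqr_ge0 //|].
have h1 : t ^+ 4 <= C * (4 * t ^+ 4) * Phi * Pr ^+ 2.
  apply: (le_trans T4); apply: ler_wpM2r; first exact: sqr_ge0.
  apply: ler_pM; [exact: f40 | exact: P40 | | exact: E4ph].
  apply: (le_trans Ef4); apply: ler_wpM2l; first exact: ltW.
  have -> : 4 * t ^+ 4 = (2 * t ^+ 2) ^+ 2 by ring.
  nra.
have t4 : 0 < t ^+ 4 by rewrite exprn_gt0.
have h2 : 1 <= 4 * C * Phi * Pr ^+ 2.
  have : t ^+ 4 * 1 <= t ^+ 4 * (4 * C * Phi * Pr ^+ 2) by rewrite mulr1; apply: (le_trans h1); rewrite le_eqVlt; apply/orP; left; apply/eqP; ring.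
  by rewrite ler_pM2l.
apply: (le_trans h2).
have -> : 16 * C ^+ 2 * Phi * Pr ^+ 2 = (4 * C) * (4 * C * Phi * Pr ^+ 2) by ring.
rewrite ler_peMl //; first by apply: le_trans ler01 h2.
have : 1 <= 4 * C by lra.
by [].
Qed.

End Prob.
Section Main.
Variable R : realType.

Lemma prod_probE (I : finType) (p v : I -> R) n (F : {set 'I_n} -> R) (t : R) :
  prod_prob p v (fun x => t <= `|mleval F x|) =
  Ew p (fun w : {ffun 'I_n -> I} => if t <= `|ev v F w| then 1 else 0).
Proof.
rewrite /prod_prob /Ew big_mkcond /=; apply: eq_bigr => w _.
rewrite /ev /mlev /mleval /Wt; case: ifP => _; by rewrite ?mulr1 ?mulr0.
Qed.

Lemma expR_sqr (x : R) : expR (2 * x) = expR x ^+ 2.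
Proof. by rewrite -expRM_natl. Qed.

End Main.

Theorem lemma4p11 (R : realType) (I : finType) (p v : I -> R)
  (hp : is_fin_distr p)
  (hmean : fexpect p v = 0)
  (hvar : fexpect p (fun i => v i ^+ 2) = 1) :
  exists K' : R, 0 < K' /\
    forall (n d : nat) (fhat : {set 'I_n} -> R) (T : {set 'I_n}) (t : R),
      deg_le fhat d -> 1 <= t ->
      1 <= \sum_(i in T) fhat [set i] ^+ 2 ->
      (forall i, i \in T -> `|fhat [set i]| <= (K' * t * d%:R)^-1) ->
      expR (- (K' * t ^+ 2 * (d%:R) ^+ 2)) <=
        prod_prob p v (fun x => t <= `|mleval fhat x|).
Proof.
case: hp => p_ge0 p_sum1.
have hm1 : \sum_i p i * v i = 0 := hmean.
have hm2 : \sum_i p i * v i ^+ 2 = 1 := hvar.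
set M := 1 + \sum_i `|v i|.
have vM i : `|v i| <= M.
  rewrite /M (bigD1 i) //=.
  have : 0 <= \sum_(j | j != i) `|v j| by apply: sumr_ge0 => j _; exact: normr_ge0.
  lra.
have M1 : 1 <= M by rewrite /M lerDl sumr_ge0 // => j _; exact: normr_ge0.
set c := cB p v; set b := bet p v.
have c3 : 3 <= c by apply: cB_ge3.
have b0 : 0 <= b by rewrite /b /bet addr_ge0 ?m4_ge0 // addr_ge0 // mulr_ge0 // normr_ge0.
exists (8 + 2 * c + 41 * b + 9 * M); split; first lra.
set K := 8 + 2 * c + 41 * b + 9 * M.
move=> n d fhat T t hdeg ht hsum hsmall.
have t0 : 0 < t by lra.
have K0 : 0 < K by rewrite /K; lra.
set a := fun i => fhat [set i].
set eta := \sum_(i in T) a i ^+ 2.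
have eta1 : 1 <= eta := hsum.
have eta0 : 0 < eta by lra.
have d0 : (0 < d)%N.
  case: d hsmall {hdeg} => // hs; exfalso.
  have : eta = 0.
    rewrite /eta big1 // => i iT; have := hs i iT.
    by rewrite mulr0 invr0 normr_le0 => /eqP h; rewrite /a h expr0n.
  lra.
have dR : 1 <= d%:R :> R by rewrite ler1n.
set bb := fun i => if i \in T then a i / eta else 0.
pose rp := \sum_(S : {set 'I_n}) (fhat S * \prod_(i in S) bb i) *: 'X^#|S|.
have rpE s : rp.[s] = mlev fhat (fun i => s * bb i).
  rewrite /rp horner_sum /mlev; apply: eq_bigr => S _.
  by rewrite hornerZ hornerXn big_split /= prodr_const; ring.
have rp1 : rp`_1 = 1.
  rewrite /rp coef_sum.
  rewrite (eq_bigr (fun S : {set 'I_n} => if #|S| == 1%N then fhat S * \prod_(i in S) bb i else 0)); last first.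
    move=> S _; rewrite coefZ coefXn.
    by rewrite eq_sym; case: (#|S| == 1%N); rewrite ?mulr1 ?mulr0.
  rewrite -big_mkcond /=.
  have -> : \sum_(S : {set 'I_n} | #|S| == 1%N) (fhat S * \prod_(i in S) bb i) =
      \sum_(S in ([set [set i] | i : 'I_n])%SET) (fhat S * \prod_(i in S) bb i).
    apply: eq_bigl => S; apply/cards1P/imsetP => [[x ->]|[x _ ->]]; by exists x.
  rewrite big_imset /=; last by move=> x y _ _; apply: set1_inj.
  under eq_bigr do rewrite big_set1.
  rewrite (eq_bigr (fun i => if i \in T then a i ^+ 2 / eta else 0)); last first.
    by move=> i _; rewrite /bb; case: ifP => _; rewrite ?mulr0 // mulrA -expr2.
  by rewrite -big_mkcond /= -mulr_suml -/eta divff // gt_eqF.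
have sz : (size rp <= d.+1)%N.
  apply/leq_sizeP => k hk; rewrite /rp coef_sum big1 // => S _.
  rewrite coefZ coefXn; case: (eqVneq k #|S|) => [e|h]; last by rewrite mulr0.
  case: (eqVneq (fhat S) 0) => [->|/hdeg hS]; first by rewrite !mul0r.
  by exfalso; rewrite -e in hS; lia.
have td : 0 < t * d%:R by rewrite mulr_gt0 // (lt_le_trans ltr01 dR).
have h2t : 0 < 2 * t by rewrite mulr_gt0.
have hsig : 4 * d%:R * (2 * t) < 9 * t * d%:R.
  rewrite (_ : 4 * d%:R * (2 * t) = 8 * (t * d%:R)); last by ring.
  rewrite (_ : 9 * t * d%:R = 9 * (t * d%:R)); last by ring.
  lra.
have [s [hs hr]] := bern_exists d0 sz h2t rp1 hsig.
set th := fun i => s * bb i.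
have hb i : `|bb i| <= (K * t * d%:R)^-1.
  rewrite /bb; case: ifP => iT; last by rewrite normr0 invr_ge0 ltW // !mulr_gt0 // (lt_le_trans ltr01 dR).
  rewrite normrM normfV (gtr0_norm eta0); apply: le_trans (hsmall i iT).
  by rewrite ler_pdivrMr // ler_peMr // normr_ge0.
have Ktd : 0 < K * t * d%:R by rewrite !mulr_gt0 // (lt_le_trans ltr01 dR).
have hth i : `|th i| <= 9 / K.
  rewrite /th normrM; apply: le_trans (ler_pM (normr_ge0 _) (normr_ge0 _) hs (hb i)) _.
  have dn0 : d%:R != 0 :> R by rewrite gt_eqF // (lt_le_trans ltr01 dR).
  have tn0 : t != 0 by rewrite gt_eqF.
  have Kn0 : K != 0 by rewrite gt_eqF.
  rewrite le_eqVlt; apply/orP; left; apply/eqP; field.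
  by rewrite dn0 tn0 Kn0.
have hth1 i : `|th i| <= 1.
  apply: le_trans (hth i) _; rewrite ler_pdivrMr // mul1r /K; lra.
have hv j i : `|th j * v i| <= 1.
  rewrite normrM; apply: le_trans (ler_pM (normr_ge0 _) (normr_ge0 _) (hth j) (vM i)) _.
  rewrite mulrAC ler_pdivrMr // mul1r /K; lra.
have hm : 2 * t <= `|mlev fhat th| by rewrite -rpE.
have A := antic p_ge0 p_sum1 hm1 hm2 t0 hv hth1 hdeg hm.
rewrite -/c -/b in A.
rewrite prod_probE.
set Pr := Ew p _ in A *.
have Pr0 : 0 <= Pr.
  by apply: Ew_ge0 => // w; case: ifP => _; rewrite ?ler01.
have sumth : \sum_j th j ^+ 2 <= (9 * t * d%:R) ^+ 2.
  have e : \sum_j th j ^+ 2 = s ^+ 2 / eta.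
    rewrite /th (eq_bigr (fun j => s ^+ 2 * (if j \in T then a j ^+ 2 / eta ^+ 2 else 0))); last first.
      by move=> j _; rewrite exprMn /bb; case: ifP => _; rewrite ?expr0n ?mulr0 // expr_div_n.
    rewrite -mulr_sumr -big_mkcond /= -mulr_suml -/eta; field; by rewrite gt_eqF.
  rewrite e; apply: le_trans (_ : s ^+ 2 <= _).
    by rewrite ler_pdivrMr // ler_peMr // sqr_ge0.
  rewrite -(real_normK (num_real s)) !expr2; apply: ler_pM => //; exact: normr_ge0.
have Phib : \prod_j (1 + b * th j ^+ 2) <= expR (b * (9 * t * d%:R) ^+ 2).
  apply: le_trans (_ : \prod_j expR (b * th j ^+ 2) <= _).
    apply: ler_prod => j _; apply/andP; split; last exact: expR_ge1Dx.
    by apply: addr_ge0; [exact: ler01|exact: mulr_ge0 b0 (sqr_ge0 _)].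
  rewrite -expR_sum ler_expR -mulr_sumr; exact: ler_wpM2l.
have Cb : (c ^+ (2 * d)) ^+ 2 <= expR ((4 * d)%:R * c).
  have hc : c <= expR c by apply: (le_trans _ (expR_ge1Dx c)); lra.
  have c0 : 0 <= c by lra.
  have d4 : (0 < 4 * d)%N by rewrite muln_gt0 d0.
  rewrite -exprM (_ : (2 * d * 2 = 4 * d)%N); last by rewrite mulnC mulnA.
  by rewrite expRM_natl (ler_pXn2r d4) // nnegrE ?expR_ge0.
have e16 : 16 <= expR (15 : R) by apply: (le_trans _ (expR_ge1Dx 15)); lra.
have t21 : 1 <= t ^+ 2 by apply: exprn_ege1.
have d21 : 1 <= d%:R ^+ 2 :> R by apply: exprn_ege1.
have Q1 : 1 <= t ^+ 2 * d%:R ^+ 2 by apply: mulr_ege1.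
have Qd : d%:R <= t ^+ 2 * d%:R ^+ 2.
  apply: le_trans (_ : d%:R <= d%:R ^+ 2) _; first by rewrite expr2 ler_peMr // (le_trans ler01 dR).
  by rewrite ler_peMl // (le_trans ler01 d21).
have Ex : 15 + (4 * d)%:R * c + b * (9 * t * d%:R) ^+ 2 <= 2 * (K * t ^+ 2 * d%:R ^+ 2).
  set Q := t ^+ 2 * d%:R ^+ 2 in Q1 Qd *.
  have e1 : (4 * d)%:R * c <= 4 * (c * Q).
    rewrite natrM -mulrA (mulrC c); apply: ler_wpM2l; first lra.
    by apply: ler_wpM2r; [lra|].
  have e2 : b * (9 * t * d%:R) ^+ 2 = 81 * (b * Q) by rewrite /Q; ring.
  have e3 : 2 * (K * t ^+ 2 * d%:R ^+ 2) = 16 * Q + 4 * (c * Q) + 82 * (b * Q) + 18 * (M * Q).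
    by rewrite /Q /K; ring.
  have bQ : 0 <= b * Q by rewrite mulr_ge0 // (le_trans ler01 Q1).
  have MQ : 0 <= M * Q by rewrite mulr_ge0 // (le_trans ler01) ?Q1 ?M1.
  rewrite e2 e3; lra.
have B1 : 1 <= expR (2 * (K * t ^+ 2 * d%:R ^+ 2)) * Pr ^+ 2.
  apply: (le_trans A); apply: ler_wpM2r; first exact: sqr_ge0.
  apply: le_trans (_ : expR 15 * expR ((4 * d)%:R * c) * expR (b * (9 * t * d%:R) ^+ 2) <= _).
    have c0 : 0 <= c by lra.
    have C20 : 0 <= (c ^+ (2 * d)) ^+ 2 by rewrite exprn_ge0 // exprn_ge0.
    have Ph0 : 0 <= \prod_j (1 + b * th j ^+ 2).
      apply: prodr_ge0 => j _; apply: addr_ge0; [exact: ler01 | exact: mulr_ge0 b0 (sqr_ge0 _)].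
    have X1 : 16 * (c ^+ (2 * d)) ^+ 2 <= expR 15 * expR ((4 * d)%:R * c).
      by apply: ler_pM => //; lra.
    apply: ler_pM => //; first by rewrite mulr_ge0 //; lra.
  by rewrite -!expRD ler_expR.
have B2 : expR (- (2 * (K * t ^+ 2 * d%:R ^+ 2))) <= Pr ^+ 2.
  rewrite expRN -div1r ler_pdivrMr ?expR_gt0 // mulrC.
  exact: B1.
rewrite (_ : - (2 * (K * t ^+ 2 * d%:R ^+ 2)) = 2 * (- (K * t ^+ 2 * d%:R ^+ 2))) in B2; last by ring.
rewrite expR_sqr in B2.
have := expR_ge0 (- (K * t ^+ 2 * d%:R ^+ 2)) => X0.
by rewrite -(ler_pXn2r (_ : (0 < 2)%N)) ?nnegrE.
Qed.
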